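(* Let $\mathbf G$ be a group, let $G_{<\infty}$ be the set of its elements of finite order, and let $\Phi$ be the finite-order component of $\mathcal G(\mathbf G)$. Assume $\lvert\mathrm{Cen}(\Phi)\rvert=1$. Let $x\in G_{<\infty}$ be such that the $\equiv$-class $[x]_\equiv$ of $x$ in $\Phi$ is not a single $\approx$-class (i.e. $[x]_\equiv$ is a complex or infinitely complex $\equiv$-class). Then the closed neighborhood of $x$ in $\mathcal G(\mathbf G)$ equals the closed neighborhood of $x$ in $\mathcal G_e(\mathbf G)$.
   Context: All graphs are simple. For a group $\mathbf G$: the power graph $\mathcal G(\mathbf G)$ has vertex set $G$, and distinct $x,y$ are adjacent iff $y=x^n$ or $x=y^n$ for some $n\in\mathbb Z\setminus\{0\}$ (so the identity is not adjacent to elements of infinite order). The enhanced power graph $\mathcal G_e(\mathbf G)$ has vertex set $G$, and distinct $x,y$ are adjacent iff there are $z\in G$ and $n,m\in\mathbb Z$ with $x=z^n$, $y=z^m$ (equivalently $\langle x,y\rangle$ is cyclic). $G_{<\infty}$ denotes the set of elements of finite order; it induces a connected component of $\mathcal G(\mathbf G)$, called the finite-order component $\Phi$. The center of $\Phi$ is $\mathrm{Cen}(\Phi)=\{x\in G_{<\infty}: x \text{ is adjacent in } \mathcal G(\mathbf G) \text{ to all } y\in G_{<\infty}\setminus\{x\}\}$. The closed neighborhood of a vertex $x$ is $\overline N(x)=\{x\}\cup\{y: y\sim x\}$. For $x,y\in G_{<\infty}$, $x\equiv y$ means $x,y$ have the same closed neighborhood in $\Phi$; $x\approx y$ means $\langle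 x\rangle=\langle y\rangle$. Each $\equiv$-class is a union of $\approx$-classes. (Under $\lvert\mathrm{Cen}(\Phi)\rvert=1$, a $\equiv$-class that is not a single $\approx$-class is either complex, i.e. of the form $\{g\in\langle y\rangle: o(g)\ge p^s\}$ for a prime $p$, an element $y$ of order $p^r$ and $r>s>0$, or infinitely complex, i.e. $\bigcup_{k\ge s}[x_k]_\approx$ with $o(x_k)=p^k$ and $x_k\in\langle x_{k+1}\rangle$ for all $k\ge s$.) *)

(* Defs.v *)
From Stdlib Require Import ZArith.

Record Group := {
  carrier :> Type;
  gmul : carrier -> carrier -> carrier;
  gone : carrier;
  ginv : carrier -> carrier;
  gmulA : forall x y z, gmul x (gmul y z) = gmul (gmul x y) z;
  gmul1x : forall x, gmul gone x = x;
  gmulx1 : forall x, gmul x gone = x;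
  gmulVx : forall x, gmul (ginv x) x = gone;
  gmulxV : forall x, gmul x (ginv x) = gone
}.

Section Defs.
Variable G : Group.

Fixpoint npow (x : G) (n : nat) : G :=
  match n with
  | O => gone G
  | S k => gmul G x (npow x k)
  end.

Definition zpow (x : G) (n : Z) : G :=
  match n with
  | Z0 => gone G
  | Zpos p => npow x (Pos.to_nat p)
  | Zneg p => ginv G (npow x (Pos.to_nat p))
  end.

Definition fin_order (x : G) : Prop := exists n : nat, (0 < n)%nat /\ npow x n = gone G.

Definition pow_adj (x y : G) : Prop :=
  x <> y /\
  ((exists n : Z, n <> 0%Z /\ y = zpow x n) \/ (exists n : Z, n <> 0%Z /\ x = zpow y n)).

Definition epow_adj (x y : G) : Prop :=
  x <> y /\ exists (z : G) (n m : Z), x = zpow z n /\ y = zpow z m.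

Definition closed_nbhd (x y : G) : Prop := y = x \/ pow_adj x y.
Definition closed_enbhd (x y : G) : Prop := y = x \/ epow_adj x y.

Definition closed_nbhd_Phi (x y : G) : Prop := fin_order y /\ closed_nbhd x y.

Definition in_Cen (x : G) : Prop :=
  fin_order x /\ forall y, fin_order y -> y <> x -> pow_adj x y.

Definition nequiv (x y : G) : Prop := forall z, closed_nbhd_Phi x z <-> closed_nbhd_Phi y z.

Definition same_cyclic (x y : G) : Prop :=
  forall z, (exists n : Z, z = zpow x n) <-> (exists n : Z, z = zpow y n).

End Defs.

(* Main.v *)
Require Import Defs.
From Stdlib Require Import ZArith.
From Stdlib Require Import Lia Classical Wf_nat.
From mathcomp Require all_boot zify order.

Module Aux.
Import mathcomp.boot.all_boot mathcomp.zify.zify mathcomp.order.order.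
Section S.
Variable G : Defs.Group.
Local Notation e := (gone G).
Local Notation mul := (gmul G).
Local Notation pw := (npow G).

Lemma npow_add x m n : pw x (m + n) = mul (pw x m) (pw x n).
Proof. elim: m => [|m IH] /=; first by rewrite gmul1x. by rewrite IH gmulA. Qed.

Lemma npow1 x : pw x 1 = x.
Proof. by rewrite /= gmulx1. Qed.

Lemma npow_mul x m n : pw x (m * n) = pw (pw x m) n.
Proof. elim: n => [|n IH]; first by rewrite muln0. by rewrite mulnS npow_add IH. Qed.

Lemma npow_e n : pw e n = e.
Proof. elim: n => [|n IH] //=; by rewrite IH gmul1x. Qed.

Lemma inv_uniq a b : mul a b = e -> ginv G a = b.
Proof.
move=> H. rewrite -[ginv G a]gmulx1 -H gmulA gmulVx gmul1x. done.
Qed.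

Lemma cancel_r a b : mul a b = b -> a = e.
Proof.
move=> H. rewrite -[a]gmulx1 -(gmulxV G b) gmulA H gmulxV. done.
Qed.

Lemma min_ex (P : nat -> Prop) : (exists n, P n) -> exists n, P n /\ forall m, P m -> n <= m.
Proof.
case=> n; elim/lt_wf_ind: n => n IH Pn.
case: (classic (exists m, (m < n)%coq_nat /\ P m)) => [[m [lt Pm]]|H].
  exact: IH lt Pm.
exists n; split => // m Pm. case: (leqP n m) => // lt; exfalso; apply: H; exists m; split => //; lia.
Qed.

Definition is_ord (x : G) N := 0 < N /\ pw x N = e /\ forall m, 0 < m -> pw x m = e -> N <= m.

Lemma ord_ex x : fin_order G x -> exists N, is_ord x N.
Proof.
case=> n [n0 Hn].
have [N [[N0 HN] Hmin]] := @min_ex (fun n => 0 < n /\ pw x n = e) (ex_intro _ n (conj (introT ltP n0) Hn)).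
exists N; split => //; split => // m m0 Hm; exact: Hmin.
Qed.

Lemma ord_dvd x N k : is_ord x N -> pw x k = e <-> N %| k.
Proof.
move=> [N0 [HN Hmin]]; split=> [H|H].
  have Hr : pw x (k %% N) = e.
    move: H; rewrite {1}(divn_eq k N) npow_add mulnC npow_mul HN npow_e gmul1x. done.
  case: (posnP (k %% N)) => [r0|rp]; first by rewrite /dvdn r0.
  have := Hmin _ rp Hr. by rewrite leqNgt ltn_pmod.
rewrite -(divnK H) mulnC npow_mul HN npow_e. done.
Qed.

Definition memN (t w : G) := exists k, t = pw w k.

Lemma npow_zpow w k : pw w k = zpow G w (Z.of_nat k).
Proof. case: k => // k. by rewrite /= SuccNat2Pos.id_succ. Qed.

Lemma zpow_fin w n : fin_order G w -> exists k, zpow G w n = pw w k.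
Proof.
move=> /ord_ex [N [N0 [HN _]]].
case: n => [|p|p] /=; first by exists 0.
  by exists (Pos.to_nat p).
exists (N * Pos.to_nat p - Pos.to_nat p). apply: inv_uniq.
rewrite -npow_add. have -> : Pos.to_nat p + (N * Pos.to_nat p - Pos.to_nat p) = N * Pos.to_nat p by nia.
by rewrite npow_mul HN npow_e.
Qed.

Lemma mem_memN t w : fin_order G w -> (exists n : Z, t = zpow G w n) <-> memN t w.
Proof.
move=> fw; split.
  case=> n ->. have [k ->] := zpow_fin w n fw. by exists k.
case=> k ->; exists (Z.of_nat k); exact: npow_zpow.
Qed.

Lemma memN_nz w t : fin_order G w -> memN t w -> exists n, n <> 0%Z /\ t = zpow G w n.
Proof.
move=> /ord_ex [N [N0 [HN _]]] [k ->].
case: (posnP k) => [->|kp].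
  exists (Z.of_nat N); split; first lia. by rewrite -npow_zpow HN.
exists (Z.of_nat k); split; first lia. exact: npow_zpow.
Qed.

Lemma memN_trans a b c : memN a b -> memN b c -> memN a c.
Proof. move=> [k ->] [l ->]; exists (l * k); by rewrite npow_mul. Qed.

Lemma memN_refl a : memN a a.
Proof. by exists 1; rewrite npow1. Qed.

Lemma memN_fin a c : fin_order G c -> memN a c -> fin_order G a.
Proof.
move=> [N [N0 HN]] [k ->]; exists N; split => //.
by rewrite -npow_mul mulnC npow_mul HN npow_e.
Qed.

Lemma nbhd_char w t : fin_order G w ->
  (closed_nbhd_Phi G w t <-> fin_order G t /\ (memN t w \/ memN w t)).
Proof.
move=> fw; split.
  case=> ft H; split => //. case: H => [->|[_ [[n [_ E]]|[n [_ E]]]]].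
  - left; exact: memN_refl.
  - left; apply/mem_memN => //; by exists n.
  - right; apply/mem_memN => //; by exists n.
case=> ft H; split => //; rewrite /closed_nbhd /pow_adj.
case: (classic (t = w)) => [->|ne]; [by left|right].
split; first by move=> E; apply: ne.
case: H => H.
  left; exact: memN_nz.
right; exact: memN_nz.
Qed.

Lemma pw_eq z N i j : is_ord z N -> pw z i = pw z j -> i = j %[mod N].
Proof.
move=> Ho.
wlog le : i j / j <= i.
  move=> W. case: (leqP j i) => [l|l] H; first exact: W.
  symmetry; apply: W (ltnW l) _; done.
move=> H. apply/eqP. rewrite eqn_mod_dvd //. apply/(@ord_dvd z N _ Ho).
apply: (@cancel_r _ (pw z j)). by rewrite -npow_add subnK.
Qed.

Lemma memz z N i j : is_ord z N -> (memN (pw z j) (pw z i) <-> gcdn i N %| j).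
Proof.
move=> Ho; have [N0 [HN _]] := Ho; split.
  case=> k; rewrite -npow_mul => /(@pw_eq z N _ _ Ho) Hm.
  rewrite /dvdn -(modn_dvdm j (dvdn_gcdr i N)) Hm (modn_dvdm _ (dvdn_gcdr i N)).
  by rewrite -/(dvdn _ _) dvdn_mulr // dvdn_gcdl.
case: (posnP i) => [->|ip].
  rewrite gcd0n => /(@ord_dvd z N _ Ho) ->. exists 0; done.
move=> Hd. case: (egcdnP N ip) => km kn E _.
exists (km * (j %/ gcdn i N)). rewrite -npow_mul.
have -> : i * (km * (j %/ gcdn i N)) = N * (kn * (j %/ gcdn i N)) + j.
  rewrite -{3}(divnK Hd) mulnA [i * km]mulnC E; nia.
by rewrite npow_add npow_mul HN npow_e gmul1x.
Qed.

Lemma memz' z N i j : is_ord z N -> (memN (pw z j) (pw z i) <-> gcdn i N %| gcdn j N).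
Proof. move=> Ho. have := @memz z N i j Ho. by rewrite dvdn_gcd dvdn_gcdr andbT. Qed.

Lemma NT a b c : a %| c -> ~~ (c %| a) -> (c %| lcmn a b) || (lcmn a b %| c) ->
  (a %| gcdn b c) || (gcdn b c %| a) -> (a %| b) || ((b %| a) && (b %| c)).
Proof.
move=> ac nca H1 /orP [H|H].
  by rewrite (dvdn_trans H (dvdn_gcdl _ _)).
case/orP: H1 => H1.
  have E : gcdn (lcmn a b) c = c by apply/gcdn_idPr.
  rewrite Order.NatDvd.meetUl (gcdn_idPl ac) (lcmn_idPl H) in E.
  by rewrite E dvdnn in nca.
move: H1; rewrite dvdn_lcm => /andP [_ bc].
by rewrite (gcdn_idPl bc) in H; rewrite H bc orbT.
Qed.

Lemma core z N u v y : is_ord z N -> memN u z -> memN v z -> memN y z -> memN v u -> ~ memN u v ->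
 (forall t, memN t z -> ((memN t u \/ memN u t) <-> (memN t v \/ memN v t))) ->
 memN y u \/ (memN u y /\ memN v y).
Proof.
move=> Ho [iu ->] [iv ->] [iy ->] Hvu Nuv Hst.
have M := @memz' z N.
move/(M _ _ Ho): Hvu => ac.
have nca' : ~~ (gcdn iv N %| gcdn iu N).
  apply/negP => H; apply: Nuv; apply/(M _ _ Ho); exact: H.
set a := gcdn iu N in ac nca' *; set b := gcdn iy N; set c := gcdn iv N in ac nca' *.
have aN : a %| N by exact: dvdn_gcdr.
have bN : b %| N by exact: dvdn_gcdr.
have cN : c %| N by exact: dvdn_gcdr.
have H1 : (c %| lcmn a b) || (lcmn a b %| c).
  have gl : gcdn (lcmn a b) N = lcmn a b by apply/gcdn_idPl; rewrite dvdn_lcm aN bN.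
  have [HH _] := Hst (pw z (lcmn a b)) (ex_intro _ _ erefl).
  have : memN (pw z (lcmn a b)) (pw z iv) \/ memN (pw z iv) (pw z (lcmn a b)).
    apply: HH; left; apply/(M _ _ Ho); by rewrite gl dvdn_lcml.
  case=> /(M _ _ Ho); rewrite gl => ->; by rewrite ?orbT.
have H2 : (a %| gcdn b c) || (gcdn b c %| a).
  have gl : gcdn (gcdn b c) N = gcdn b c by apply/gcdn_idPl; rewrite (dvdn_trans (dvdn_gcdl _ _) bN).
  have [_ HH] := Hst (pw z (gcdn b c)) (ex_intro _ _ erefl).
  have : memN (pw z (gcdn b c)) (pw z iu) \/ memN (pw z iu) (pw z (gcdn b c)).
    apply: HH; right; apply/(M _ _ Ho); by rewrite gl dvdn_gcdr.
  case=> /(M _ _ Ho); rewrite gl => ->; by rewrite ?orbT.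
case/orP: (NT _ _ _ ac nca' H1 H2) => [ab|/andP [ba bc]].
  left; apply/(M _ _ Ho); exact: ab.
right; split; apply/(M _ _ Ho); done.
Qed.


Lemma pw_inv a k : mul (pw (ginv G a) k) (pw a k) = e.
Proof.
elim: k => [|k IH]; first by rewrite /= gmul1x.
have C : pw a k.+1 = mul (pw a k) a by rewrite -addn1 npow_add npow1.
rewrite C /= -gmulA (gmulA _ (pw (ginv G a) k)) IH gmul1x gmulVx. done.
Qed.

Lemma inv_e : ginv G e = e.
Proof. apply: inv_uniq; exact: gmul1x. Qed.

Lemma z_fin z n : fin_order G (zpow G z n) -> zpow G z n <> e -> fin_order G z.
Proof.
case: n => [|p|p] /= [k [k0 Hk]] ne //.
  exists (Pos.to_nat p * k); split; last by rewrite npow_mul.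
  have := Pos2Nat.is_pos p; lia.
exists (Pos.to_nat p * k); split.
  have := Pos2Nat.is_pos p; lia.
have := pw_inv (pw z (Pos.to_nat p)) k. rewrite Hk gmul1x => E.
by rewrite npow_mul.
Qed.


Lemma sc_of_mem x x' : fin_order G x -> fin_order G x' -> memN x x' -> memN x' x ->
  same_cyclic G x x'.
Proof.
move=> fx fx' H1 H2 t; rewrite (mem_memN t x fx) (mem_memN t x' fx').
split=> H; [exact: memN_trans _ _ _ H H1 | exact: memN_trans _ _ _ H H2].
Qed.

Lemma nequiv_of_sc x x' : fin_order G x -> fin_order G x' -> same_cyclic G x x' -> nequiv G x x'.
Proof.
move=> fx fx' S.
have H1 : memN x x'. apply/mem_memN => //; apply/S; exists 1%Z; by rewrite /= gmulx1.
have H2 : memN x' x. apply/mem_memN => //; apply/S; exists 1%Z; by rewrite /= gmulx1.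
move=> t; rewrite (nbhd_char x t fx) (nbhd_char x' t fx').
split=> [[ft [H|H]]|[ft [H|H]]]; split => //.
- left; exact: memN_trans _ _ _ H H1.
- right; exact: memN_trans _ _ _ H2 H.
- left; exact: memN_trans _ _ _ H H2.
- right; exact: memN_trans _ _ _ H1 H.
Qed.

Lemma fin_e : fin_order G e.
Proof. exists 1; split => //; by rewrite npow1. Qed.

Lemma main_aux
  (HCen : exists c : G, forall y : G, in_Cen G y <-> y = c)
  (x : G) (Hx : fin_order G x)
  (Hcls : ~ (forall y : G, fin_order G y -> (nequiv G x y <-> same_cyclic G x y))) :
  forall y : G, closed_nbhd G x y <-> closed_enbhd G x y.
Proof.
have [x' [fx' [Hne Hnsc]]] : exists x', fin_order G x' /\ nequiv G x x' /\ ~ same_cyclic G x x'.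
  apply: NNPP => H; apply: Hcls => x' fx'.
  case: (classic (same_cyclic G x x')) => S.
    split => // _; exact: nequiv_of_sc.
  case: (classic (nequiv G x x')) => Q.
    by exfalso; apply: H; exists x'.
  tauto.
have Hst0 : forall t, fin_order G t /\ (memN t x \/ memN x t) <-> fin_order G t /\ (memN t x' \/ memN x' t).
  move=> t; rewrite -(nbhd_char x t Hx) -(nbhd_char x' t fx'); exact: Hne.
have xne : x <> e.
  move=> xe; subst x; apply: Hnsc.
  have [c Hc] := HCen.
  have C1 : in_Cen G e.
    split; first exact: fin_e. move=> t ft te; split; first by move=> E; apply: te.
    right; apply: memN_nz => //. by exists 0.
  have C2 : in_Cen G x'.
    split => // t ft tx.
    have : closed_nbhd_Phi G x' t.
      apply/Hne; apply/(nbhd_char e t fin_e); split => //; right; by exists 0.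
    by case=> _ [E|E].
  have E1 := proj1 (Hc _) C1; have E2 := proj1 (Hc _) C2.
  rewrite E1 -E2 => t; tauto.
move=> y; split.
  case=> [->|[ne [[n [_ E]]|[n [_ E]]]]]; [by left|right|right].
    split => //; exists x, 1%Z, n; split => //; by rewrite /= gmulx1.
  split => //; exists y, n, 1%Z; split => //; by rewrite /= gmulx1.
case=> [->|[ne [z [n [m [Ex Ey]]]]]]; first by left.
right; split => //.
have fz : fin_order G z by apply: (@z_fin z n); rewrite -Ex.
have xz : memN x z by apply/mem_memN => //; exists n.
have yz : memN y z by apply/mem_memN => //; exists m.
have fy : fin_order G y by exact: memN_fin _ _ fz yz.
suff : memN y x \/ memN x y.
  case=> H; [left|right]; exact: memN_nz _ _ _ H.
have [N Ho] := ord_ex _ fz.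
have x'x : memN x' x \/ memN x x'.
  have := proj2 (Hst0 x') (conj fx' (or_introl (memN_refl x'))). by case.
have nboth : ~ (memN x' x /\ memN x x').
  case=> H1 H2; apply: Hnsc; exact: sc_of_mem.
have viaHst : memN y x' -> memN y x \/ memN x y.
  move=> H; have := proj2 (Hst0 y) (conj fy (or_introl H)); by case.
case: x'x => H.
  have Hnot : ~ memN x x' by move=> H'; apply: nboth.
  have := @core z N x x' y Ho xz (memN_trans _ _ _ H xz) yz H Hnot.
  case.
    move=> t tz; have ft := memN_fin _ _ fz tz.
    split=> W; [exact: proj2 (proj1 (Hst0 t) (conj ft W)) | exact: proj2 (proj2 (Hst0 t) (conj ft W))].
  by left.
  by case=> ?; right.
have Hnot : ~ memN x' x by move=> H'; apply: nboth.
have : memN z x' \/ memN x' z.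
  by have := proj1 (Hst0 z) (conj fz (or_intror xz)); case.
case=> Hz.
  apply: viaHst; exact: memN_trans _ _ _ yz Hz.
have := @core z N x' x y Ho Hz xz yz H Hnot.
case.
  move=> t tz; have ft := memN_fin _ _ fz tz.
  split=> W; [exact: proj2 (proj2 (Hst0 t) (conj ft W)) | exact: proj2 (proj1 (Hst0 t) (conj ft W))].
  exact: viaHst.
by case=> _ ?; right.
Qed.

End S.

End Aux.

Theorem mainTheorem1 (G : Group)
  (HCen : exists c : G, forall y : G, in_Cen G y <-> y = c)
  (x : G) (Hx : fin_order G x)
  (Hcls : ~ (forall y : G, fin_order G y -> (nequiv G x y <-> same_cyclic G x y))) :
  forall y : G, closed_nbhd G x y <-> closed_enbhd G x y.
Proof.
  exact (@Aux.main_aux G HCen x Hx Hcls).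
Qed.
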